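(* Let $n \geq 1$ and let $d_1, d_2, \ldots, d_n$ be positive integers. Then there exists a connected signed bipartite graph $G(U,V)$ whose signed degree set is $$S = \left\{ d_1,\ \sum_{i=1}^{2} d_i,\ \ldots,\ \sum_{i=1}^{n} d_i \right\}.$$
   Context: A signed bipartite graph $G(U,V)$ is a finite simple bipartite graph with bipartition $U, V$ (both nonempty, every edge joining a vertex of $U$ to a vertex of $V$) in which each edge is assigned a sign, positive or negative. The signed degree of a vertex $x$ is $\mathrm{sdeg}(x) = d^+(x) - d^-(x)$, where $d^+(x)$ (resp. $d^-(x)$) is the number of positive (resp. negative) edges incident with $x$. The signed degree set of $G(U,V)$ is the set of distinct signed degrees of its vertices. $G(U,V)$ is called connected if each vertex of $U$ is connected (by a path) to every vertex of $V$. *)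

(* Defs.v *)
From mathcomp Require Import all_boot all_order all_algebra.
Set Implicit Arguments. Unset Strict Implicit. Unset Printing Implicit Defensive.
Import Order.TTheory GRing.Theory Num.Theory.

(* A signed bipartite graph with parts U = 'I_p and V = 'I_q is given by
   e : 'I_p -> 'I_q -> option bool :
     e u v = None        : no edge between u and v,
     e u v = Some true   : a positive edge uv,
     e u v = Some false  : a negative edge uv.
   This encodes exactly the finite simple bipartite signed graphs
   (at most one edge between u and v, all edges between U and V). *)

Definition sgn_edge (o : option bool) : int :=
  match o with None => 0%R | Some true => 1%R | Some false => (-1)%R end.

Definition sdegU (p q : nat) (e : 'I_p -> 'I_q -> option bool) (u : 'I_p) : int :=
  (\sum_(v < q) sgn_edge (e u v))%R.
Definition sdegV (p q : nat) (e : 'I_p -> 'I_q -> option bool) (v : 'I_q) : int :=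
  (\sum_(u < p) sgn_edge (e u v))%R.

(* signed degree set (as a sequence; membership is what matters) *)
Definition sdeg_set (p q : nat) (e : 'I_p -> 'I_q -> option bool) : seq int :=
  [seq sdegU e u | u : 'I_p] ++ [seq sdegV e v | v : 'I_q].

Definition badj (p q : nat) (e : 'I_p -> 'I_q -> option bool) : rel ('I_p + 'I_q) :=
  fun x y => match x, y with
             | inl u, inr v => e u v != None
             | inr v, inl u => e u v != None
             | _, _ => false
             end.

Definition bconnected (p q : nat) (e : 'I_p -> 'I_q -> option bool) : Prop :=
  forall (u : 'I_p) (v : 'I_q), connect (badj e) (inl u) (inr v).

(* Main.v *)
Require Import Defs.
From mathcomp Require Import all_boot all_order all_algebra.
From mathcomp Require Import zify.
Import GRing.Theory Num.Theory.

Definition blocks (f : nat -> nat) (m B : nat) : seq nat :=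
  flatten [seq nseq (f b) b | b <- iota m B].

Lemma count_blocks f m B c :
  count_mem c (blocks f m B) = if (m <= c) && (c < m + B) then f c else 0.
Proof.
elim: B m => [|B IH] m /=; first by rewrite /blocks /= addn0; case: ifP => //; lia.
rewrite /blocks /= count_cat count_nseq.
rewrite [count _ _](IH m.+1) /=.
have [->|ne] := eqVneq m c.
  by rewrite ltnn /= leqnn addnS ltnS leq_addr mul1n addn0.
rewrite mul0n add0n; congr (if _ then _ else _).
rewrite addSnnS; move/eqP: ne; lia.
Qed.

Open Scope ring_scope.

Lemma sum_blocks (F : nat -> int) f m B :
  \sum_(x <- blocks f m B) F x = \sum_(b <- iota m B) F b *+ f b.
Proof.
elim: B m => [|B IH] m /=; first by rewrite /blocks /= !big_nil.
by rewrite /blocks /= big_cat big_cons big_nseq iter_addr_0 -IH.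
Qed.

Lemma sum_ord_nth (F : nat -> int) (s : seq nat) :
  \sum_(i < size s) F (nth 0%N s i) = \sum_(x <- s) F x.
Proof. by rewrite (big_nth 0%N) big_mkord. Qed.

Lemma sum_count (b : nat) (s : seq nat) :
  \sum_(x <- s) (((x == b)%N : nat)%:Z) = (count_mem b s)%:Z.
Proof.
elim: s => [|x s IH]; first by rewrite big_nil.
by rewrite big_cons IH /= PoszD.
Qed.

Lemma sgn_if (c : bool) : sgn_edge (if c then Some true else None) = (c : nat)%:Z.
Proof. by case: c. Qed.

Section Cons.
Variable n : nat.
Variable d : 'I_n.+1 -> nat.
Hypothesis dpos : forall i, (0 < d i)%N.

Definition s (b : nat) : nat := (\sum_(i < n.+1 | (i <= b)%N) d i)%N.
Definition t := s 0.
Definition B := (n.+1 + n)%N.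
Definition w (b : nat) := if (b < n.+1)%N then (s b).-1 else t.+1.
Definition LR := blocks (fun _ => t) 0 B.
Definition LC := blocks w 0 B.
Definition pp := size LR.
Definition qq := (size LC).+1.
Definition ee (u : 'I_pp) (v : 'I_qq) : option bool :=
  if val v == 0%N then Some (nth 0%N LR u < n.+1)%N
  else if nth 0%N LC (val v).-1 == nth 0%N LR u then Some true else None.

Lemma s_pos b : (0 < s b)%N.
Proof.
rewrite /s (bigD1 ord0) //=; exact: ltn_addr.
Qed.

Lemma in_blocks f x : x \in blocks f 0 B -> (x < B)%N.
Proof.
rewrite -has_pred1 has_count count_blocks.
by case: ifP => //= /andP[].
Qed.

Lemma countLR c : (c < B)%N -> count_mem c LR = t.
Proof. by move=> cB; rewrite count_blocks /= cB. Qed.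

Lemma t_pos : (0 < t)%N.
Proof. exact: s_pos. Qed.

Lemma inLR c : (c < B)%N -> c \in LR.
Proof. by move=> cB; rewrite -has_pred1 has_count countLR // t_pos. Qed.

Lemma rowdeg (u : 'I_pp) :
  sdegU ee u = Posz (s (if (nth 0%N LR u < n.+1)%N then nth 0%N LR u else 0%N)).
Proof.
rewrite /sdegU big_ord_recl.
under eq_bigr => i _ do rewrite /ee /= sgn_if add0n.
rewrite (sum_ord_nth (fun x => ((x == nth 0%N LR u)%N : nat)%:Z)) sum_count /ee /=.
have bB : (nth 0%N LR u < B)%N by apply: in_blocks; apply: mem_nth.
rewrite count_blocks /= bB /w.
case: ifP => bn /=.
  by rewrite -PoszD add1n prednK // s_pos.
by rewrite -[t.+1]addn1 PoszD addrC addrK.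
Qed.

Lemma coldeg (v : 'I_qq) : sdegV ee v = Posz t.
Proof.
rewrite /sdegV /ee.
case: eqP => [v0|v0].
  rewrite (sum_ord_nth (fun x => sgn_edge (Some (x < n.+1)%N))).
  rewrite sum_blocks /B iotaD add0n.
  have h1 : \sum_(i <- iota 0 n.+1) sgn_edge (Some (i < n.+1)%N) *+ t = (Posz t) *+ n.+1.
    rewrite (eq_big_seq (fun=> (Posz t))); last first.
      by move=> b; rewrite mem_iota add0n => /andP[_ ->]; rewrite natz.
    by rewrite big_const_seq count_predT size_iota iter_addr_0.
  have h2 : \sum_(i <- iota n.+1 n) sgn_edge (Some (i < n.+1)%N) *+ t = - (Posz t) *+ n.
    rewrite (eq_big_seq (fun=> - (Posz t))); last first.
      move=> b; rewrite mem_iota => /andP[bn _].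
      by rewrite ltnNge bn /= mulNrn natz.
    by rewrite big_const_seq count_predT size_iota iter_addr_0.
  rewrite big_cat h1 h2 /=.
  by rewrite mulrSr mulNrn addrAC subrr add0r.
have vlt : ((val v).-1 < size LC)%N.
  by move: v0; case: v => [[|m] h] //= _; rewrite -ltnS.
rewrite (sum_ord_nth (fun x => sgn_edge (if nth 0%N LC (val v).-1 == x then Some true else None))).
under eq_bigr => x _ do rewrite sgn_if eq_sym.
rewrite sum_count countLR //.
by apply: in_blocks; apply: mem_nth.
Qed.

Definition h0 : 'I_qq := Ordinal (ltn0Sn (size LC)).

Lemma conn u v : connect (badj ee) (inl u) (inr v).
Proof.
have e0 : forall u', badj ee (inl u') (inr h0) by move=> u'; rewrite /badj /ee.
case: (eqVneq (val v) 0%N) => [v0|v0].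
  by apply: connect1; rewrite /badj /ee v0 eqxx.
have vlt : ((val v).-1 < size LC)%N.
  by move: v0; case: v => [[|m] h] //= _; rewrite -ltnS.
have cB : (nth 0%N LC (val v).-1 < B)%N by apply: in_blocks; apply: mem_nth.
have cin := inLR _ cB.
have ilt : (index (nth 0%N LC (val v).-1) LR < pp)%N by rewrite index_mem.
pose u' : 'I_pp := Ordinal ilt.
apply: connect_trans (connect1 (e0 u)) _.
have e1 : badj ee (inr h0) (inl u') by rewrite /badj /ee.
have e2 : badj ee (inl u') (inr v).
  by rewrite /badj /ee (negbTE v0) /= nth_index // eqxx.
exact: connect_trans (connect1 e1) (connect1 e2).
Qed.

Lemma pp_pos : (0 < pp)%N.
Proof.
have := inLR 0 (ltn0Sn _ : (0 < B)%N); rewrite /pp; by case: LR.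
Qed.

End Cons.

Theorem theorem2p1 (n : nat) (d : 'I_n -> nat) :
  (0 < n)%N -> (forall i, (0 < d i)%N) ->
  exists (p q : nat) (e : 'I_p -> 'I_q -> option bool),
    [/\ (0 < p)%N, (0 < q)%N, bconnected e &
        forall z : int, z \in sdeg_set e <->
          exists k : 'I_n, z = Posz (\sum_(i < n | i <= k) d i)%N].
Proof.
case: n d => [//|n] d _ dpos.
exists (pp n d), (qq n d), (@ee n d); split.
- exact: pp_pos.
- by [].
- by move=> u v; apply: conn.
move=> z; rewrite /sdeg_set mem_cat; split.
  case/orP => /mapP [x _ ->].
    rewrite (rowdeg _ _ dpos); case: ifP => h; first by exists (Ordinal h).
    by exists ord0.
  by rewrite coldeg; exists ord0.
case=> k ->; apply/orP; left; apply/mapP.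
have kB : (k < B n)%N by rewrite /B ltn_addr.
have ilt : (index (val k) (LR n d) < pp n d)%N by rewrite index_mem (inLR _ _ dpos).
exists (Ordinal ilt); first by rewrite mem_enum.
by rewrite (rowdeg _ _ dpos) /= nth_index ?(inLR _ _ dpos) // ltn_ord.
Qed.
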